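(* For every general channel $\mathbf W$ and every real $R$, \[ C_p(R\mid\mathbf W)=\inf_{\mathbf P}\lim_{\gamma\downarrow0}I_p(R-\gamma\mid\mathbf P,\mathbf W)=\inf_{\mathbf P}\sup_{\mathbf Q}\lim_{\gamma\downarrow0}J_p(R-\gamma\mid\mathbf P,\mathbf Q,\mathbf W), \] and for every $0\le\epsilon<1$, \[ C(\epsilon\mid\mathbf W)=\sup_{\mathbf P}I(\epsilon\mid\mathbf P,\mathbf W)=\sup_{\mathbf P}\inf_{\mathbf Q}J(\epsilon\mid\mathbf P,\mathbf Q,\mathbf W). \]
   Context: A general channel $\mathbf W=\{W^n\}_{n\ge1}$ consists of finite (or countable) input sets $\mathcal X_n$, output sets $\mathcal Y_n$ and conditional distributions $W^n_x=W^n(\cdot|x)$ on $\mathcal Y_n$, $x\in\mathcal X_n$. $\mathbf P=\{P^n\}$ ranges over sequences of distributions on $\mathcal X_n$, $\mathbf Q=\{Q^n\}$ over sequences of distributions on $\mathcal Y_n$; $W^n_{P^n}(y)=\sum_xP^n(x)W^n_x(y)$. Logarithms natural. Define $I_p(R|\mathbf P,\mathbf W)=\limsup_n\sum_xP^n(x)W^n_x\{y:\frac1n\log\frac{W^n_x(y)}{W^n_{P^n}(y)}<R\}$, $I(\epsilon|\mathbf P,\mathbf W)=\sup\{R: I_p(R|\mathbf P,\mathbf W)\le\epsilon\}$, $J_p(R|\mathbf P,\mathbf Q,\mathbf W)=\limsup_n\sum_xP^n(x)W^n_x\{y:\frac1n\log\frac{W^n_x(y)}{Q^n(y)}<R\}$,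 $J(\epsilon|\mathbf P,\mathbf Q,\mathbf W)=\sup\{R:J_p(R|\mathbf P,\mathbf Q,\mathbf W)\le\epsilon\}$. A code for $W^n$ is $\Phi=(N,\phi,\{\mathcal D_i\}_{i=1}^N)$, $\phi:\{1..N\}\to\mathcal X_n$, pairwise disjoint $\mathcal D_i\subset\mathcal Y_n$; $|\Phi|=N$; $P_{e,W^n}(\Phi)=\frac1N\sum_i(1-W^n_{\phi(i)}(\mathcal D_i))$. Over all code sequences $\{\Phi_n\}$: $C_p(R|\mathbf W)=\inf\{\limsup_nP_{e,W^n}(\Phi_n):\liminf_n\frac1n\log|\Phi_n|\ge R\}$, $C(\epsilon|\mathbf W)=\sup\{\liminf_n\frac1n\log|\Phi_n|:\limsup_nP_{e,W^n}(\Phi_n)\le\epsilon\}$. *)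

(* Defs.v *)
From Stdlib Require Import Reals Lra ClassicalEpsilon Classical.
Open Scope R_scope.

Inductive Rbar := Finite (r : R) | p_infty | m_infty.

Definition Rbar_le (x y : Rbar) : Prop :=
  match x, y with
  | m_infty, _ => True
  | _, p_infty => True
  | p_infty, _ => False
  | _, m_infty => False
  | Finite a, Finite b => a <= b
  end.

Definition Rbar_lt (x y : Rbar) : Prop := Rbar_le x y /\ x <> y.

Definition is_lub_Rbar (E : Rbar -> Prop) (l : Rbar) : Prop :=
  (forall x, E x -> Rbar_le x l) /\
  (forall b, (forall x, E x -> Rbar_le x b) -> Rbar_le l b).

Definition is_glb_Rbar (E : Rbar -> Prop) (l : Rbar) : Prop :=
  (forall x, E x -> Rbar_le l x) /\
  (forall b, (forall x, E x -> Rbar_le b x) -> Rbar_le b l).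

(* supremum / infimum of a set of extended reals (always exist; sup of the
   empty set is -oo, inf of the empty set is +oo) *)
Definition Rbar_sup (E : Rbar -> Prop) : Rbar :=
  epsilon (inhabits p_infty) (is_lub_Rbar E).
Definition Rbar_inf (E : Rbar -> Prop) : Rbar :=
  epsilon (inhabits p_infty) (is_glb_Rbar E).

Definition limsup (u : nat -> R) : Rbar :=
  Rbar_inf (fun l => exists N : nat,
    l = Rbar_sup (fun v => exists k, (N <= k)%nat /\ v = Finite (u k))).
Definition liminf (u : nat -> R) : Rbar :=
  Rbar_sup (fun l => exists N : nat,
    l = Rbar_inf (fun v => exists k, (N <= k)%nat /\ v = Finite (u k))).

Definition Rbar_nbhd (L : Rbar) (V : Rbar -> Prop) : Prop :=
  match L with
  | Finite l => exists e, 0 < e /\ forall r, Rabs (r - l) < e -> V (Finite r)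
  | p_infty => exists M, forall v, Rbar_lt (Finite M) v -> V v
  | m_infty => exists M, forall v, Rbar_lt v (Finite M) -> V v
  end.

Definition is_left_lim (f : R -> Rbar) (x : R) (L : Rbar) : Prop :=
  forall V, Rbar_nbhd L V ->
    exists d, 0 < d /\ forall g, 0 < g < d -> V (f (x - g)).

Definition Lim_left (f : R -> Rbar) (x : R) : Rbar :=
  epsilon (inhabits p_infty) (is_left_lim f x).

Definition real (x : Rbar) : R := match x with Finite r => r | _ => 0 end.

(* sum over nat of a nonnegative family (sup of partial sums); all uses below
   are of summable families bounded by 1 *)
Definition psum (f : nat -> R) : R :=
  real (Rbar_sup (fun v => exists N, v = Finite (sum_f_R0 f N))).

Definition ind (A : Prop) : R :=
  if excluded_middle_informative A then 1 else 0.

(* Index k of every sequence corresponds to block length n = k+1.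
   Countable alphabets are represented (up to relabelling) as subsets of nat. *)
Definition bl (k : nat) : R := INR (S k).

Definition is_dist (A : nat -> Prop) (p : nat -> R) : Prop :=
  (forall x, 0 <= p x) /\ (forall x, ~ A x -> p x = 0) /\ infinite_sum p 1.

Record channel := {
  inX : nat -> nat -> Prop;            (* inX k x  <->  x in X_n *)
  inY : nat -> nat -> Prop;            (* inY k y  <->  y in Y_n *)
  Wc : nat -> nat -> nat -> R;         (* Wc k x y = W^n(y|x) *)
  X_nonempty : forall k, exists x, inX k x;
  W_dist : forall k x, inX k x -> is_dist (inY k) (Wc k x)
}.

Definition input_seq (W : channel) (P : nat -> nat -> R) : Prop :=
  forall k, is_dist (inX W k) (P k).
Definition output_seq (W : channel) (Q : nat -> nat -> R) : Prop :=
  forall k, is_dist (inY W k) (Q k).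

Definition Wmeas (W : channel) (k x : nat) (A : nat -> Prop) : R :=
  psum (fun y => Wc W k x y * ind (A y)).

Definition outP (W : channel) (P : nat -> nat -> R) (k y : nat) : R :=
  psum (fun x => P k x * Wc W k x y).

(* the event (1/n) log (a / b) < R, with log 0 = -oo and a/0 = +oo for a > 0 *)
Definition dens_lt (k : nat) (a b r : R) : Prop :=
  0 < a -> (0 < b /\ ln (a / b) / bl k < r).

Definition Ip_seq (W : channel) (P : nat -> nat -> R) (r : R) (k : nat) : R :=
  psum (fun x => P k x *
    Wmeas W k x (fun y => dens_lt k (Wc W k x y) (outP W P k y) r)).

Definition I_p (W : channel) (P : nat -> nat -> R) (r : R) : Rbar :=
  limsup (Ip_seq W P r).

Definition I_eps (W : channel) (P : nat -> nat -> R) (eps : R) : Rbar :=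
  Rbar_sup (fun v => exists r, v = Finite r /\ Rbar_le (I_p W P r) (Finite eps)).

Definition Jp_seq (W : channel) (P Q : nat -> nat -> R) (r : R) (k : nat) : R :=
  psum (fun x => P k x *
    Wmeas W k x (fun y => dens_lt k (Wc W k x y) (Q k y) r)).

Definition J_p (W : channel) (P Q : nat -> nat -> R) (r : R) : Rbar :=
  limsup (Jp_seq W P Q r).

Definition J_eps (W : channel) (P Q : nat -> nat -> R) (eps : R) : Rbar :=
  Rbar_sup (fun v => exists r, v = Finite r /\ Rbar_le (J_p W P Q r) (Finite eps)).

(* messages are 0, ..., N-1 *)
Record code (W : channel) (k : nat) := {
  cN : nat;
  cphi : nat -> nat;
  cD : nat -> nat -> Prop;
  cN_pos : (1 <= cN)%nat;
  cphi_in : forall i, (i < cN)%nat -> inX W k (cphi i);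
  cD_sub : forall i y, (i < cN)%nat -> cD i y -> inY W k y;
  cD_disj : forall i j y, (i < cN)%nat -> (j < cN)%nat -> i <> j ->
              cD i y -> cD j y -> False
}.

Arguments cN {W k}.
Arguments cphi {W k}.
Arguments cD {W k}.

Definition Pe (W : channel) (k : nat) (c : code W k) : R :=
  / INR (cN c) *
  sum_f_R0 (fun i => 1 - Wmeas W k (cphi c i) (cD c i)) (pred (cN c)).

Definition rate (W : channel) (k : nat) (c : code W k) : R :=
  ln (INR (cN c)) / bl k.

Definition C_p (W : channel) (r : R) : Rbar :=
  Rbar_inf (fun v => exists Phi : forall k, code W k,
    Rbar_le (Finite r) (liminf (fun k => rate W k (Phi k))) /\
    v = limsup (fun k => Pe W k (Phi k))).

Definition C_eps (W : channel) (eps : R) : Rbar :=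
  Rbar_sup (fun v => exists Phi : forall k, code W k,
    Rbar_le (limsup (fun k => Pe W k (Phi k))) (Finite eps) /\
    v = liminf (fun k => rate W k (Phi k))).

(* Main.v *)
Require Import Defs.
From Stdlib Require Import Reals ZArith Lra Lia ClassicalEpsilon Classical.
Open Scope R_scope.
Import Defs.

Lemma Rbar_le_refl x : Rbar_le x x.
Proof. destruct x; simpl; auto; lra. Qed.

Lemma Rbar_le_trans x y z : Rbar_le x y -> Rbar_le y z -> Rbar_le x z.
Proof. destruct x, y, z; simpl; intros; auto; try lra; contradiction. Qed.

Lemma Rbar_le_antisym x y : Rbar_le x y -> Rbar_le y x -> x = y.
Proof. destruct x, y; simpl; intros; try contradiction; auto.
  f_equal; lra. Qed.

Lemma Rbar_le_total x y : Rbar_le x y \/ Rbar_le y x.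
Proof. destruct x, y; simpl; auto. lra. Qed.

Lemma Rbar_not_le x y : ~ Rbar_le x y -> Rbar_le y x.
Proof. intros H. destruct (Rbar_le_total x y); tauto. Qed.

Lemma lub_ex (E : Rbar -> Prop) : exists l, is_lub_Rbar E l.
Proof.
  destruct (classic (E p_infty)) as [Hp|Hp].
  { exists p_infty; split; [intros x _; destruct x; simpl; auto|].
    intros b Hb. apply Hb; auto. }
  destruct (classic (exists r, E (Finite r))) as [[r0 Hr0]|Hn].
  - destruct (classic (bound (fun r => E (Finite r)))) as [Hb|Hb].
    + destruct (completeness _ Hb (ex_intro _ r0 Hr0)) as [m [Hm1 Hm2]].
      exists (Finite m); split.
      * intros x Ex; destruct x; simpl; auto.
      * intros b Hbb. destruct b; simpl.
        -- apply Hm2. intros x Ex. apply (Hbb (Finite x) Ex).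
        -- auto.
        -- apply (Hbb (Finite r0) Hr0).
    + exists p_infty; split.
      * intros x _; destruct x; simpl; auto.
      * intros b Hbb. destruct b; simpl; auto.
        -- apply Hb. exists r. intros x Ex. apply (Hbb (Finite x) Ex).
        -- apply (Hbb (Finite r0) Hr0).
  - exists m_infty; split.
    + intros x Ex. destruct x; simpl; auto; apply Hn; eauto.
    + intros b _; destruct b; simpl; auto.
Qed.

Lemma glb_ex (E : Rbar -> Prop) : exists l, is_glb_Rbar E l.
Proof.
  destruct (classic (E m_infty)) as [Hp|Hp].
  { exists m_infty; split; [intros x _; destruct x; simpl; auto|].
    intros b Hb. apply Hb; auto. }
  destruct (classic (exists r, E (Finite r))) as [[r0 Hr0]|Hn].
  - destruct (classic (bound (fun r => E (Finite (- r))))) as [Hb|Hb].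
    + assert (Hne : exists r, E (Finite (- r))) by (exists (- r0); rewrite Ropp_involutive; exact Hr0).
      destruct (completeness _ Hb Hne) as [m [Hm1 Hm2]].
      exists (Finite (- m)); split.
      * intros x Ex; destruct x; simpl; auto.
        assert (r <= - - r) by lra. 
        assert (- r <= m) by (apply Hm1; rewrite Ropp_involutive; auto). lra.
      * intros b Hbb. destruct b; simpl.
        -- assert (m <= - r). { apply Hm2. intros x Ex. 
             pose proof (Hbb (Finite (-x)) Ex). simpl in H. lra. } lra.
        -- apply (Hbb (Finite r0) Hr0).
        -- auto.
    + exists m_infty; split.
      * intros x _; destruct x; simpl; auto.
      * intros b Hbb. destruct b; simpl; auto.
        -- apply Hb. exists (- r). intros x Ex. pose proof (Hbb _ Ex). simpl in H. lra.
        -- apply (Hbb (Finite r0) Hr0).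
  - exists p_infty; split.
    + intros x Ex. destruct x; simpl; auto; apply Hn; eauto.
    + intros b _; destruct b; simpl; auto.
Qed.

Lemma sup_spec E : is_lub_Rbar E (Rbar_sup E).
Proof. unfold Rbar_sup. apply epsilon_spec. apply lub_ex. Qed.
Lemma inf_spec E : is_glb_Rbar E (Rbar_inf E).
Proof. unfold Rbar_inf. apply epsilon_spec. apply glb_ex. Qed.

Lemma sup_ub E x : E x -> Rbar_le x (Rbar_sup E).
Proof. intros; apply (proj1 (sup_spec E)); auto. Qed.
Lemma sup_least E b : (forall x, E x -> Rbar_le x b) -> Rbar_le (Rbar_sup E) b.
Proof. intros; apply (proj2 (sup_spec E)); auto. Qed.
Lemma inf_lb E x : E x -> Rbar_le (Rbar_inf E) x.
Proof. intros; apply (proj1 (inf_spec E)); auto. Qed.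
Lemma inf_greatest E b : (forall x, E x -> Rbar_le b x) -> Rbar_le b (Rbar_inf E).
Proof. intros; apply (proj2 (inf_spec E)); auto. Qed.

Lemma lub_unique E l : is_lub_Rbar E l -> Rbar_sup E = l.
Proof. intros [H1 H2]. apply Rbar_le_antisym.
  - apply sup_least; auto.
  - apply H2. intros; apply sup_ub; auto. Qed.

Lemma Rbar_le_eps_r x c : (forall d, 0 < d -> Rbar_le x (Finite (c + d))) -> Rbar_le x (Finite c).
Proof. intros H. destruct x; simpl.
  - destruct (Rle_dec r c); auto. exfalso. pose proof (H ((r - c)/2) ltac:(lra)). simpl in H0. lra.
  - pose proof (H 1 ltac:(lra)); simpl in H0; auto.
  - auto. Qed.

Lemma Rbar_le_eps_l x c : (forall d, 0 < d -> Rbar_le (Finite (c - d)) x) -> Rbar_le (Finite c) x.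
Proof. intros H. destruct x; simpl.
  - destruct (Rle_dec c r); auto. exfalso. pose proof (H ((c - r)/2) ltac:(lra)). simpl in H0. lra.
  - auto.
  - pose proof (H 1 ltac:(lra)); simpl in H0; auto. Qed.

Lemma Rbar_lt_witness r x : ~ Rbar_le x (Finite r) -> exists r', r < r' /\ Rbar_le (Finite r') x.
Proof. destruct x; simpl; intros H.
  - exists r0; split; lra.
  - exists (r + 1); split; auto; lra.
  - tauto. Qed.

Lemma Rbar_le_lt_all x y : (forall r, ~ Rbar_le x (Finite r) -> Rbar_le (Finite r) y) -> Rbar_le x y.
Proof. intros H. destruct x.
  - apply Rbar_le_eps_l. intros d Hd. apply H. simpl. lra.
  - destruct y; simpl; auto.
    + pose proof (H (r + 1) ltac:(simpl; auto)). simpl in H0. lra.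
    + apply (H 0); simpl; auto.
  - simpl; auto. Qed.
Definition ev (P : nat -> Prop) := exists N, forall n, (N <= n)%nat -> P n.

Lemma ev_and P Q : ev P -> ev Q -> ev (fun n => P n /\ Q n).
Proof. intros [N1 H1] [N2 H2]. exists (max N1 N2). intros n Hn. split; [apply H1|apply H2]; lia. Qed.

Lemma ev_mono (P Q : nat -> Prop) : (forall n, P n -> Q n) -> ev P -> ev Q.
Proof. intros H [N HN]; exists N; auto. Qed.

Definition tsup (u : nat -> R) N := Rbar_sup (fun v => exists k, (N <= k)%nat /\ v = Finite (u k)).
Definition tinf (u : nat -> R) N := Rbar_inf (fun v => exists k, (N <= k)%nat /\ v = Finite (u k)).

Lemma limsup_le_c u c : Rbar_le (limsup u) (Finite c) -> forall d, 0 < d -> ev (fun n => u n <= c + d).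
Proof.
  intros H d Hd.
  destruct (classic (exists N, Rbar_le (tsup u N) (Finite (c + d)))) as [[N HN]|HN].
  - exists N. intros n Hn. assert (Rbar_le (Finite (u n)) (Finite (c + d))).
    { eapply Rbar_le_trans; [|apply HN]. apply sup_ub. eauto. } simpl in H0; auto.
  - exfalso. assert (Rbar_le (Finite (c + d)) (limsup u)).
    { apply inf_greatest. intros x [N ->]. apply Rbar_not_le. intro; apply HN; eauto. }
    pose proof (Rbar_le_trans _ _ _ H0 H). simpl in H1. lra.
Qed.

Lemma limsup_c_le u c : (forall d, 0 < d -> ev (fun n => u n <= c + d)) -> Rbar_le (limsup u) (Finite c).
Proof.
  intros H. apply Rbar_le_eps_r. intros d Hd. destruct (H d Hd) as [N HN].
  eapply Rbar_le_trans. apply inf_lb. exists N. reflexivity.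
  apply sup_least. intros x [k [Hk ->]]. simpl. auto.
Qed.

Lemma limsup_ge_lb u a : (forall k, a <= u k) -> Rbar_le (Finite a) (limsup u).
Proof.
  intros H. apply inf_greatest. intros x [N ->].
  eapply Rbar_le_trans; [|apply sup_ub; exists N; split; [lia|reflexivity]]. simpl; auto.
Qed.

Lemma limsup_le_ub u b : (forall k, u k <= b) -> Rbar_le (limsup u) (Finite b).
Proof. intros H. apply limsup_c_le. intros d Hd. exists 0%nat. intros n _. specialize (H n). lra. Qed.

Lemma limsup_le u v a : (forall k, a <= v k) ->
  (forall d, 0 < d -> ev (fun n => u n <= v n + d)) -> Rbar_le (limsup u) (limsup v).
Proof.
  intros Ha H. pose proof (limsup_ge_lb v a Ha) as Hlb.
  destruct (limsup v) eqn:E.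
  - apply limsup_c_le. intros d Hd.
    destruct (H (d/2) ltac:(lra)) as [N1 H1].
    destruct (limsup_le_c v r ltac:(rewrite E; simpl; lra) (d/2) ltac:(lra)) as [N2 H2].
    exists (max N1 N2). intros n Hn. pose proof (H1 n ltac:(lia)). pose proof (H2 n ltac:(lia)). lra.
  - destruct (limsup u); simpl; auto.
  - simpl in Hlb. contradiction.
Qed.

Lemma liminf_ge u r : Rbar_le (Finite r) (liminf u) -> forall d, 0 < d -> ev (fun n => r - d <= u n).
Proof.
  intros H d Hd.
  destruct (classic (exists N, Rbar_le (Finite (r - d)) (tinf u N))) as [[N HN]|HN].
  - exists N. intros n Hn. assert (Rbar_le (Finite (r - d)) (Finite (u n))).
    { eapply Rbar_le_trans; [apply HN|]. apply inf_lb. eauto. } simpl in H0; auto.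
  - exfalso. assert (Rbar_le (liminf u) (Finite (r - d))).
    { apply sup_least. intros x [N ->]. apply Rbar_not_le. intro; apply HN; eauto. }
    pose proof (Rbar_le_trans _ _ _ H H0). simpl in H1. lra.
Qed.

Lemma liminf_ge_c u r : (forall d, 0 < d -> ev (fun n => r - d <= u n)) -> Rbar_le (Finite r) (liminf u).
Proof.
  intros H. apply Rbar_le_eps_l. intros d Hd. destruct (H d Hd) as [N HN].
  eapply Rbar_le_trans; [|apply sup_ub; exists N; reflexivity].
  apply inf_greatest. intros x [k [Hk ->]]. simpl. auto.
Qed.

Lemma is_left_lim_ub f x L c : (forall s, exists h, f s = Finite h) -> is_left_lim f x L ->
  (forall g, 0 < g -> Rbar_le (f (x - g)) c) -> Rbar_le L c.
Proof.
  intros Hf HL Hc. destruct (classic (Rbar_le L c)) as [|Hn]; auto. exfalso.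
  destruct c as [c| |].
  - destruct (HL (fun v => Rbar_le (Finite c) v /\ v <> Finite c)) as [d [Hd Hg]].
    + destruct L as [l| |]; simpl in Hn.
      * exists (l - c). split; [lra|]. intros r Hr. split; [simpl|].
        -- apply Rabs_def2 in Hr. lra.
        -- intro E; injection E; intro; apply Rabs_def2 in Hr; lra.
      * exists c. intros v [H1 H2]; split; auto. 
      * contradiction.
    + destruct (Hg (d/2) ltac:(lra)) as [H1 H2]. pose proof (Hc (d/2) ltac:(lra)).
      apply H2. apply Rbar_le_antisym; auto.
  - apply Hn; destruct L; simpl; auto.
  - destruct (Hf (x - 1)) as [h Hh]. pose proof (Hc 1 ltac:(lra)). rewrite Hh in H. simpl in H. auto.
Qed.

Lemma is_left_lim_lb f x L c d0 : (forall s, exists h, f s = Finite h) -> is_left_lim f x L -> 0 < d0 ->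
  (forall g, 0 < g < d0 -> Rbar_le c (f (x - g))) -> Rbar_le c L.
Proof.
  intros Hf HL Hd0 Hc. destruct (classic (Rbar_le c L)) as [|Hn]; auto. exfalso.
  destruct c as [c| |].
  - destruct (HL (fun v => Rbar_le v (Finite c) /\ v <> Finite c)) as [d [Hd Hg]].
    + destruct L as [l| |]; simpl in Hn.
      * exists (c - l). split; [lra|]. intros r Hr. split; [simpl|].
        -- apply Rabs_def2 in Hr. lra.
        -- intro E; injection E; intro; apply Rabs_def2 in Hr; lra.
      * contradiction.
      * exists c. intros v [H1 H2]; split; auto.
    + set (g := Rmin (d/2) (d0/2)).
      assert (g <= d/2) by apply Rmin_l. assert (g <= d0/2) by apply Rmin_r.
      assert (0 < g) by (unfold g; apply Rmin_case; lra).
      assert (Hgd : 0 < g < d) by lra. assert (Hgd0 : 0 < g < d0) by lra.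
      destruct (Hg g Hgd) as [K1 K2]. pose proof (Hc g Hgd0) as K3.
      apply K2. apply Rbar_le_antisym; auto.
  - destruct (Hf (x - d0/2)) as [h Hh]. pose proof (Hc (d0/2) ltac:(lra)). rewrite Hh in H. simpl in H. auto.
  - apply Hn; destruct L; simpl; auto.
Qed.

Lemma left_lim_ex (h : R -> R) x b : (forall s t, s <= t -> h s <= h t) -> (forall s, h s <= b) ->
  exists L, is_left_lim (fun s => Finite (h s)) x L.
Proof.
  intros Hm Hb.
  set (E := fun v => exists g, 0 < g /\ v = h (x - g)).
  assert (HB : bound E) by (exists b; intros v [g [_ ->]]; auto).
  assert (HE : exists v, E v) by (exists (h (x - 1)); exists 1; split; [lra|auto]).
  destruct (completeness E HB HE) as [l [Hl1 Hl2]].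
  exists (Finite l). intros V [e [He HV]].
  assert (exists g0, 0 < g0 /\ l - e < h (x - g0)) as [g0 [Hg0 Hg0']].
  { apply NNPP. intro Hn. assert (l <= l - e); [|lra]. apply Hl2. intros v [g [Hg ->]].
    apply Rnot_lt_le. intro. apply Hn. eauto. }
  exists g0. split; auto. intros g [Hg1 Hg2]. apply HV.
  assert (h (x - g0) <= h (x - g)) by (apply Hm; lra).
  assert (h (x - g) <= l) by (apply Hl1; exists g; split; auto).
  apply Rabs_def1; lra.
Qed.

Lemma Lim_left_spec f x : (exists L, is_left_lim f x L) -> is_left_lim f x (Lim_left f x).
Proof. intros; unfold Lim_left; apply epsilon_spec; auto. Qed.
Lemma isum_cv f l : infinite_sum f l -> Un_cv (fun n => sum_f_R0 f n) l.
Proof. auto. Qed.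
Lemma cv_isum f l : Un_cv (fun n => sum_f_R0 f n) l -> infinite_sum f l.
Proof. auto. Qed.

Lemma Un_cv_ext u v l : (forall n, u n = v n) -> Un_cv u l -> Un_cv v l.
Proof. intros H Hu e He. destruct (Hu e He) as [N HN]. exists N. intros n Hn. rewrite <- H. auto. Qed.

Lemma Un_cv_const c : Un_cv (fun _ => c) c.
Proof. intros e He. exists 0%nat. intros. unfold Rdist. replace (c - c) with 0 by ring. rewrite Rabs_R0. auto. Qed.

Lemma isum_ext f g l : (forall x, f x = g x) -> infinite_sum f l -> infinite_sum g l.
Proof. intros H Hf. apply cv_isum. eapply Un_cv_ext; [|apply isum_cv; exact Hf].
  intros n. apply sum_eq. auto. Qed.

Lemma isum_unique f a b : infinite_sum f a -> infinite_sum f b -> a = b.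
Proof. intros; eapply UL_sequence; eauto. Qed.

Lemma isum_le f g a b : (forall x, f x <= g x) -> infinite_sum f a -> infinite_sum g b -> a <= b.
Proof. intros H Hf Hg. eapply Rle_cv_lim; [|apply Hf|apply Hg]. intros n. apply sum_Rle. auto. Qed.

Lemma isum_plus f g a b : infinite_sum f a -> infinite_sum g b -> infinite_sum (fun x => f x + g x) (a + b).
Proof. intros Hf Hg. apply cv_isum. eapply Un_cv_ext; [|apply CV_plus; [apply Hf|apply Hg]].
  intros n; simpl. rewrite sum_plus. auto. Qed.

Lemma isum_scal f a c : infinite_sum f a -> infinite_sum (fun x => c * f x) (c * a).
Proof. intros Hf. apply cv_isum. eapply Un_cv_ext; [|apply CV_mult; [apply Un_cv_const|apply Hf]].
  intros n; simpl. rewrite scal_sum. apply sum_eq. intros; ring. Qed.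

Lemma isum_zero : infinite_sum (fun _ => 0) 0.
Proof. apply cv_isum. eapply Un_cv_ext; [|apply Un_cv_const]. intros n; simpl.
  induction n; simpl; auto. rewrite <- IHn. ring. Qed.

Lemma isum_zero' f : (forall x, f x = 0) -> infinite_sum f 0.
Proof. intros H. eapply isum_ext; [|apply isum_zero]. intros; rewrite H; auto. Qed.

Lemma isum_partial_le f s : (forall x, 0 <= f x) -> infinite_sum f s -> forall n, sum_f_R0 f n <= s.
Proof. intros H Hs n. apply growing_ineq; [|apply Hs]. intros m; simpl. specialize (H (S m)). lra. Qed.

Lemma isum_nonneg f s : (forall x, 0 <= f x) -> infinite_sum f s -> 0 <= s.
Proof. intros H Hs. eapply Rle_trans; [|apply (isum_partial_le f s H Hs 0)]. simpl; auto. Qed.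

Lemma isum_bounded f B : (forall x, 0 <= f x) -> (forall n, sum_f_R0 f n <= B) ->
  exists s, infinite_sum f s /\ s <= B.
Proof.
  intros H HB. destruct (growing_cv (fun n => sum_f_R0 f n)) as [s Hs].
  - intros m; simpl. specialize (H (S m)). lra.
  - exists B. intros x [n ->]. auto.
  - exists s. split; auto. eapply Rle_cv_lim; [|apply Hs|apply Un_cv_const]. auto.
Qed.

Lemma isum_dom f g b : (forall x, 0 <= f x <= g x) -> infinite_sum g b ->
  exists a, infinite_sum f a /\ 0 <= a <= b.
Proof.
  intros H Hg. destruct (isum_bounded f b) as [a [Ha Hab]].
  - intros x; apply H.
  - intros n. eapply Rle_trans; [|apply (isum_partial_le g b)]; auto.
    + apply sum_Rle. intros; apply H.
    + intros x; pose proof (H x); lra.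
  - exists a. split; auto. split; auto. eapply isum_nonneg; eauto. intros x; apply H.
Qed.

Lemma psum_eq f s : (forall x, 0 <= f x) -> infinite_sum f s -> psum f = s.
Proof.
  intros H Hs. unfold psum. rewrite (lub_unique _ (Finite s)); auto.
  split.
  - intros x [N ->]. simpl. apply isum_partial_le; auto.
  - intros b Hb. destruct b; simpl; auto.
    + eapply Rle_cv_lim; [|apply Hs|apply Un_cv_const]. intros n.
      specialize (Hb (Finite (sum_f_R0 f n)) (ex_intro _ n eq_refl)). simpl in Hb. auto.
    + specialize (Hb (Finite (sum_f_R0 f 0)) (ex_intro _ 0%nat eq_refl)). simpl in Hb. auto.
Qed.

Fixpoint fsum (f : nat -> R) (m : nat) : R :=
  match m with O => 0 | S m => fsum f m + f m end.

Lemma fsum_ext f g m : (forall i, (i < m)%nat -> f i = g i) -> fsum f m = fsum g m.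
Proof. induction m; simpl; intros; auto. rewrite IHm, H; auto. Qed.

Lemma fsum_le f g m : (forall i, (i < m)%nat -> f i <= g i) -> fsum f m <= fsum g m.
Proof. induction m; simpl; intros; [lra|]. pose proof (H m ltac:(lia)). pose proof (IHm ltac:(intros; apply H; lia)). lra. Qed.

Lemma fsum_const c m : fsum (fun _ => c) m = INR m * c.
Proof. induction m; simpl fsum; [simpl; ring|]. rewrite IHm, S_INR. ring. Qed.

Lemma fsum_plus f g m : fsum (fun i => f i + g i) m = fsum f m + fsum g m.
Proof. induction m; simpl; [ring|]. rewrite IHm; ring. Qed.

Lemma fsum_scal f c m : fsum (fun i => c * f i) m = c * fsum f m.
Proof. induction m; simpl; [ring|]. rewrite IHm; ring. Qed.

Lemma fsum_nonneg f m : (forall i, (i < m)%nat -> 0 <= f i) -> 0 <= fsum f m.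
Proof. intros. apply Rle_trans with (fsum (fun _ => 0) m). rewrite fsum_const; lra. apply fsum_le; auto. Qed.

Lemma fsum_sum f N : sum_f_R0 f N = fsum f (S N).
Proof. induction N; simpl; [ring|]. simpl in IHN. rewrite IHN. ring. Qed.

Lemma isum_fsum (F : nat -> nat -> R) (s : nat -> R) m :
  (forall i, (i < m)%nat -> infinite_sum (F i) (s i)) ->
  infinite_sum (fun x => fsum (fun i => F i x) m) (fsum s m).
Proof.
  induction m; intros H; simpl.
  - apply isum_zero.
  - apply isum_plus; auto.
Qed.

Definition ind_T (A : Prop) : A -> ind A = 1.
Proof. intros; unfold ind; destruct excluded_middle_informative; tauto. Qed.
Definition ind_F (A : Prop) : ~ A -> ind A = 0.
Proof. intros; unfold ind; destruct excluded_middle_informative; tauto. Qed.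
Lemma ind_01 A : 0 <= ind A <= 1.
Proof. unfold ind; destruct excluded_middle_informative; lra. Qed.

Lemma isum_point (a : nat) c : infinite_sum (fun x => ind (a = x) * c) c.
Proof.
  apply cv_isum. intros e He. exists a. intros n Hn.
  replace (sum_f_R0 (fun x => ind (a = x) * c) n) with c. unfold Rdist. replace (c - c) with 0 by ring.
  rewrite Rabs_R0; auto.
  induction n.
  - assert (a = 0)%nat by lia. subst. simpl. rewrite ind_T; auto; ring.
  - simpl. destruct (Nat.eq_dec a (S n)).
    + subst. rewrite ind_T; auto. 
      assert (sum_f_R0 (fun x => ind (S n = x) * c) n = 0).
      { clear. assert (forall m, (m <= n)%nat -> sum_f_R0 (fun x => ind (S n = x) * c) m = 0).
        { induction m; intros; simpl. rewrite ind_F; [ring|lia]. rewrite IHm; [|lia]. rewrite ind_F; [ring|lia]. }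
        apply H; auto. }
      rewrite H; ring.
    + rewrite <- IHn; [|lia]. rewrite ind_F; auto. ring.
Qed.

Lemma sum_swap (f : nat -> nat -> R) N M :
  sum_f_R0 (fun x => sum_f_R0 (fun y => f x y) M) N = sum_f_R0 (fun y => sum_f_R0 (fun x => f x y) N) M.
Proof.
  induction N; simpl; auto.
  rewrite IHN. rewrite <- sum_plus. auto.
Qed.

Lemma cv_sum_fin (F : nat -> nat -> R) (l : nat -> R) M :
  (forall y, Un_cv (fun n => F n y) (l y)) ->
  Un_cv (fun n => sum_f_R0 (fun y => F n y) M) (sum_f_R0 l M).
Proof.
  induction M; intros H; simpl; auto.
  apply CV_plus; auto.
Qed.

Lemma fubini (f : nat -> nat -> R) (a : nat -> R) (A : R) :
  (forall x y, 0 <= f x y) -> (forall x, infinite_sum (f x) (a x)) -> infinite_sum a A ->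
  exists b, (forall y, infinite_sum (fun x => f x y) (b y)) /\ infinite_sum b A.
Proof.
  intros Hf Ha HA.
  assert (Ha0 : forall x, 0 <= a x) by (intros; eapply isum_nonneg; [|apply Ha]; auto).
  assert (HaA : forall N, sum_f_R0 a N <= A) by (apply isum_partial_le; auto).
  assert (Hfa : forall x y, f x y <= a x).
  { intros x y. apply Rle_trans with (sum_f_R0 (f x) y).
    - destruct y; simpl; [lra|]. pose proof (Hf x (S y)). 
      assert (0 <= sum_f_R0 (f x) y) by (apply cond_pos_sum; auto). lra.
    - apply isum_partial_le; auto. }
  assert (Hcol : forall y, exists s, infinite_sum (fun x => f x y) s /\ s <= A).
  { intros y. apply isum_bounded; auto. intros n. eapply Rle_trans; [|apply (HaA n)].
    apply sum_Rle; auto. }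
  destruct (choice _ Hcol) as [b Hb].
  assert (Hb0 : forall y, 0 <= b y) by (intros y; eapply isum_nonneg; [intros z; apply Hf|apply (proj1 (Hb y))]).
  assert (HbA : forall M, sum_f_R0 b M <= A).
  { intros M. eapply Rle_cv_lim with (Vn := fun _ => A); [| apply cv_sum_fin with (F := fun n y => sum_f_R0 (fun x => f x y) n); intros y; apply (proj1 (Hb y)) | apply Un_cv_const].
    intros n. simpl. rewrite <- sum_swap. eapply Rle_trans; [|apply (HaA n)].
    apply sum_Rle. intros x _. apply isum_partial_le; auto. }
  destruct (isum_bounded b A Hb0 HbA) as [B [HB HBA]].
  exists b. split; [intros y; apply (proj1 (Hb y))|].
  assert (A <= B); [|replace A with B by lra; auto].
  eapply Rle_cv_lim with (Vn := fun _ => B); [|apply HA|apply Un_cv_const].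
  intros N. simpl.
  eapply Rle_cv_lim; [| apply cv_sum_fin with (F := fun m x => sum_f_R0 (f x) m); intros x; apply Ha | apply Un_cv_const].
  intros M. simpl. rewrite sum_swap. eapply Rle_trans; [|apply (isum_partial_le b B Hb0 HB M)].
  apply sum_Rle. intros y _. apply isum_partial_le; auto. apply (proj1 (Hb y)).
Qed.

Lemma isum_ext2 f g a b : (forall x, f x = g x) -> a = b -> infinite_sum f a -> infinite_sum g b.
Proof. intros H <-; apply isum_ext; auto. Qed.
Section Chan.
Variable W : channel.

Lemma W_nonneg k x y : inX W k x -> 0 <= Wc W k x y.
Proof. intros H. apply (W_dist W k x H). Qed.
Lemma W_out k x y : inX W k x -> ~ inY W k y -> Wc W k x y = 0.
Proof. intros H Hy. apply (W_dist W k x H); auto. Qed.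
Lemma W_sum k x : inX W k x -> infinite_sum (Wc W k x) 1.
Proof. intros H. apply (W_dist W k x H). Qed.

Lemma Wmeas_sum k x A : inX W k x -> infinite_sum (fun y => Wc W k x y * ind (A y)) (Wmeas W k x A).
Proof.
  intros H. destruct (isum_dom (fun y => Wc W k x y * ind (A y)) (Wc W k x) 1) as [s [Hs _]].
  - intros y. pose proof (ind_01 (A y)). pose proof (W_nonneg k x y H). split; [apply Rmult_le_pos; lra|].
    rewrite <- (Rmult_1_r (Wc W k x y)) at 2. apply Rmult_le_compat_l; lra.
  - apply W_sum; auto.
  - unfold Wmeas. rewrite (psum_eq _ s); auto. intros y. pose proof (ind_01 (A y)). pose proof (W_nonneg k x y H).
    apply Rmult_le_pos; lra.
Qed.

Lemma Wmeas_le_gen k x A g s : inX W k x -> (forall y, Wc W k x y * ind (A y) <= g y) -> infinite_sum g s ->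
  Wmeas W k x A <= s.
Proof. intros H Hg Hs. eapply isum_le; [apply Hg| apply Wmeas_sum; auto| auto]. Qed.

Lemma Wmeas_ge_gen k x A g s : inX W k x -> (forall y, g y <= Wc W k x y * ind (A y)) -> infinite_sum g s ->
  s <= Wmeas W k x A.
Proof. intros H Hg Hs. eapply isum_le; [apply Hg| auto | apply Wmeas_sum; auto]. Qed.

Lemma Wmeas_bounds k x A : inX W k x -> 0 <= Wmeas W k x A <= 1.
Proof.
  intros H. split.
  - eapply Wmeas_ge_gen; [auto| |apply isum_zero]. intros y. pose proof (ind_01 (A y)). pose proof (W_nonneg k x y H).
    apply Rmult_le_pos; lra.
  - eapply Wmeas_le_gen; [auto| |apply W_sum; auto]. intros y. pose proof (ind_01 (A y)). pose proof (W_nonneg k x y H).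
    rewrite <- (Rmult_1_r (Wc W k x y)) at 2. apply Rmult_le_compat_l; lra. auto.
Qed.

Lemma Wmeas_mono k x (A B : nat -> Prop) : inX W k x -> (forall y, A y -> B y) -> Wmeas W k x A <= Wmeas W k x B.
Proof.
  intros H HAB. eapply Wmeas_le_gen; [auto| |apply Wmeas_sum; auto]. intros y. apply Rmult_le_compat_l. apply W_nonneg; auto.
  destruct (classic (A y)). rewrite !ind_T; auto; lra. rewrite ind_F; auto. apply ind_01.
Qed.

Lemma Wmeas_compl k x A : inX W k x -> Wmeas W k x A + Wmeas W k x (fun y => ~ A y) = 1.
Proof.
  intros H. eapply isum_unique; [apply isum_plus; apply Wmeas_sum; auto|].
  eapply isum_ext; [|apply W_sum; eauto]. intros y. simpl.
  destruct (classic (A y)). rewrite ind_T, ind_F; auto; ring. rewrite ind_F, ind_T; auto; ring.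
Qed.

Lemma Wmeas_full k x (A : nat -> Prop) : inX W k x -> (forall y, inY W k y -> A y) -> Wmeas W k x A = 1.
Proof.
  intros H HA. eapply isum_unique; [apply Wmeas_sum; auto|].
  eapply isum_ext; [|apply W_sum; eauto]. intros y. simpl.
  destruct (classic (inY W k y)). rewrite ind_T; auto; ring. rewrite W_out; auto; ring.
Qed.

Lemma Wmeas_sub k x (A B C : nat -> Prop) : inX W k x -> (forall y, inY W k y -> A y -> B y \/ C y) ->
  Wmeas W k x A <= Wmeas W k x B + Wmeas W k x C.
Proof.
  intros H HA. eapply Wmeas_le_gen; [auto| |apply isum_plus; apply Wmeas_sum; auto]. intros y. simpl.
  pose proof (ind_01 (B y)). pose proof (ind_01 (C y)). pose proof (W_nonneg k x y H).
  destruct (classic (inY W k y)) as [Hy|Hy]; [|rewrite W_out; auto; lra].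
  destruct (classic (A y)) as [Ha|Ha]; [|rewrite ind_F; auto; nra].
  rewrite ind_T; auto. destruct (HA y Hy Ha) as [Hb|Hc].
  rewrite (ind_T (B y)); auto. nra. rewrite (ind_T (C y)); auto. nra.
Qed.

Lemma dist_nonneg (A : nat -> Prop) p x : is_dist A p -> 0 <= p x.
Proof. intros H; apply H. Qed.
Lemma dist_out (A : nat -> Prop) p x : is_dist A p -> ~ A x -> p x = 0.
Proof. intros H; apply H. Qed.
Lemma dist_sum (A : nat -> Prop) p : is_dist A p -> infinite_sum p 1.
Proof. intros H; apply H. Qed.

Lemma pw_sum k p g : is_dist (inX W k) p -> (forall x, inX W k x -> 0 <= g x <= 1) ->
  exists s, infinite_sum (fun x => p x * g x) s /\ psum (fun x => p x * g x) = s /\ 0 <= s <= 1.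
Proof.
  intros Hp Hg.
  assert (Hb : forall x, 0 <= p x * g x <= p x).
  { intros x. pose proof (dist_nonneg _ p x Hp). destruct (classic (inX W k x)).
    - pose proof (Hg x H0). split; [nra|]. nra.
    - rewrite (dist_out _ p x Hp H0). lra. }
  destruct (isum_dom _ _ 1 Hb (dist_sum _ _ Hp)) as [s [Hs Hs1]].
  exists s. split; auto. split; auto. apply psum_eq; auto. intros; apply Hb.
Qed.

Lemma outP_col (P : nat -> nat -> R) k : is_dist (inX W k) (P k) ->
  (forall y, infinite_sum (fun x => P k x * Wc W k x y) (outP W P k y)) /\ is_dist (inY W k) (outP W P k).
Proof.
  intros Hp.
  assert (Hf : forall x y, 0 <= P k x * Wc W k x y).
  { intros x y. destruct (classic (inX W k x)).
    - apply Rmult_le_pos; [apply (dist_nonneg _ _ x Hp)| apply W_nonneg; auto].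
    - rewrite (dist_out _ _ x Hp H); lra. }
  destruct (fubini (fun x y => P k x * Wc W k x y) (P k) 1 Hf) as [b [Hb1 Hb2]].
  - intros x. destruct (classic (inX W k x)).
    + cbv beta. pose proof (isum_scal _ _ (P k x) (W_sum k x H)) as E. rewrite Rmult_1_r in E. exact E.
    + rewrite (dist_out _ _ x Hp H). apply isum_zero'. intros; try ring.
  - apply (dist_sum _ _ Hp).
  - assert (Ho : forall y, outP W P k y = b y).
    { intros y. unfold outP. apply psum_eq; [intros x; apply Hf | apply Hb1]. }
    split; [intros y; rewrite Ho; auto|].
    split; [|split].
    + intros y. rewrite Ho. eapply isum_nonneg; [|apply Hb1]. intros x; apply Hf.
    + intros y Hy. rewrite Ho. eapply isum_unique; [apply Hb1|]. apply isum_zero'. intros x.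
      destruct (classic (inX W k x)). rewrite W_out; auto; ring. rewrite (dist_out _ _ x Hp H); ring.
    + eapply isum_ext; [|apply Hb2]. intros; rewrite Ho; auto.
Qed.

End Chan.
Lemma exp_le_mono x y : x <= y -> exp x <= exp y.
Proof. intros [H|H]; [left; apply exp_increasing; auto| subst; lra]. Qed.

Definition codeP {W k} (c : code W k) (x : nat) : R :=
  / INR (cN c) * fsum (fun i => ind (cphi c i = x)) (cN c).

Lemma cN_pos_R {W k} (c : code W k) : 0 < INR (cN c).
Proof. apply lt_0_INR. pose proof (cN_pos W k c). lia. Qed.

Lemma codeP_sum {W k} (c : code W k) (g : nat -> R) :
  infinite_sum (fun x => codeP c x * g x) (/ INR (cN c) * fsum (fun i => g (cphi c i)) (cN c)).
Proof.
  eapply isum_ext; [|apply isum_scal; apply (isum_fsum (fun i x => ind (cphi c i = x) * g x))].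
  - intros x. unfold codeP. simpl. rewrite Rmult_assoc. f_equal.
    rewrite <- (Rmult_comm (g x)), <- fsum_scal. apply fsum_ext. intros; ring.
  - intros i _. eapply isum_ext; [|apply (isum_point (cphi c i) (g (cphi c i)))].
    intros x. destruct (classic (cphi c i = x)). subst; auto. rewrite ind_F; auto; ring.
Qed.

Lemma codeP_dist {W k} (c : code W k) : is_dist (inX W k) (codeP c).
Proof.
  pose proof (cN_pos_R c).
  split; [|split].
  - intros x. unfold codeP. apply Rmult_le_pos. left; apply Rinv_0_lt_compat; auto.
    apply fsum_nonneg. intros; apply ind_01.
  - intros x Hx. unfold codeP. rewrite (fsum_ext _ (fun _ => 0)). rewrite fsum_const; ring.
    intros i Hi. apply ind_F. intro E. apply Hx. rewrite <- E. apply cphi_in; auto.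
  - assert (E: / INR (cN c) * fsum (fun _ => 1) (cN c) = 1) by (rewrite fsum_const; field; lra).
    pose proof (codeP_sum c (fun _ => 1)) as S. cbv beta in S. rewrite E in S. eapply isum_ext; [|exact S]. intros; simpl; ring.
Qed.

Lemma disj_fsum {W k} (c : code W k) y m : (m <= cN c)%nat ->
  (fsum (fun i => ind (cD c i y)) m = 0 /\ forall i, (i < m)%nat -> ~ cD c i y) \/
  (fsum (fun i => ind (cD c i y)) m = 1 /\ exists i, (i < m)%nat /\ cD c i y).
Proof.
  induction m; intros Hm.
  - left. split; auto. intros; lia.
  - destruct IHm as [[H1 H2]|[H1 [i [Hi H2]]]]; [lia| |].
    + destruct (classic (cD c m y)).
      * right. simpl. rewrite H1, ind_T; auto. split; [ring|]. exists m; split; auto.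
      * left. simpl. rewrite H1, ind_F; auto. split; [ring|]. intros j Hj.
        destruct (Nat.eq_dec j m); [subst; auto|apply H2; lia].
    + right. simpl. rewrite H1, ind_F. split; [ring|]. exists i; split; auto.
      intro. apply (cD_disj W k c i m y); auto; lia.
Qed.

Lemma Pe_fsum {W k} (c : code W k) :
  Pe W k c = / INR (cN c) * fsum (fun i => 1 - Wmeas W k (cphi c i) (cD c i)) (cN c).
Proof.
  unfold Pe. rewrite fsum_sum. pose proof (cN_pos W k c). replace (S (pred (cN c))) with (cN c) by lia. auto.
Qed.

Lemma bl_pos k : 0 < bl k.
Proof. unfold bl. apply lt_0_INR. lia. Qed.

Lemma converse W k (c : code W k) (P Q : nat -> nat -> R) r g :
  P k = codeP c -> is_dist (inY W k) (Q k) -> 0 < g -> r + g <= rate W k c ->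
  Jp_seq W P Q r k <= Pe W k c + exp (- (bl k * g)).
Proof.
  intros HP HQ Hg Hrate.
  pose proof (cN_pos_R c) as HN. pose proof (bl_pos k) as Hn.
  set (N := cN c) in *. set (n := bl k) in *.
  set (E := fun x y => dens_lt k (Wc W k x y) (Q k y) r).
  set (gx := fun x => Wmeas W k x (E x)).
  assert (HJ : Jp_seq W P Q r k = / INR N * fsum (fun i => gx (cphi c i)) N).
  { unfold Jp_seq. rewrite HP. apply psum_eq; [|apply codeP_sum].
    intros x. destruct (classic (inX W k x)).
    - apply Rmult_le_pos; [apply (codeP_dist c)|]. apply Wmeas_bounds; auto.
    - rewrite (dist_out _ _ x (codeP_dist c) H). lra. }
  set (K := exp (- (n * g)) * INR N).
  assert (HK : 0 <= K) by (unfold K; apply Rmult_le_pos; [left; apply exp_pos|lra]).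
  assert (HKr : exp (r * n) <= K).
  { unfold K. unfold rate in Hrate. fold n N in Hrate.
    assert (ln (INR N) >= (r + g) * n).
    { apply Rle_ge. apply (Rmult_le_reg_r (/ n)). apply Rinv_0_lt_compat; auto.
      rewrite Rmult_assoc, Rinv_r; lra. }
    rewrite <- (exp_ln (INR N)) at 1; auto. rewrite <- exp_plus. apply exp_le_mono. lra. }
  assert (HQm : forall i, exists s, infinite_sum (fun y => Q k y * ind (cD c i y)) s /\ 0 <= s <= 1).
  { intros i. apply isum_dom with (g := Q k); [|apply (dist_sum _ _ HQ)].
    intros y. pose proof (dist_nonneg _ _ y HQ). pose proof (ind_01 (cD c i y)). split; nra. }
  destruct (choice _ HQm) as [Qm HQm'].
  assert (Hi : forall i, (i < N)%nat -> gx (cphi c i) <= (1 - Wmeas W k (cphi c i) (cD c i)) + K * Qm i).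
  { intros i Hi. assert (HX : inX W k (cphi c i)) by (apply cphi_in; auto).
    rewrite <- (Wmeas_compl W k (cphi c i) (cD c i)) by auto.
    replace (Wmeas W k (cphi c i) (cD c i) + Wmeas W k (cphi c i) (fun y => ~ cD c i y) -
             Wmeas W k (cphi c i) (cD c i)) with (Wmeas W k (cphi c i) (fun y => ~ cD c i y)) by ring.
    unfold gx. eapply Wmeas_le_gen; [auto| |apply isum_plus; [apply Wmeas_sum; auto| apply isum_scal; apply (proj1 (HQm' i))]].
    intros y. simpl. set (a := Wc W k (cphi c i) y). set (q := Q k y).
    assert (Ha : 0 <= a) by (apply W_nonneg; auto). assert (Hq : 0 <= q) by (apply (dist_nonneg _ _ y HQ)).
    pose proof (ind_01 (E (cphi c i) y)).
    destruct (classic (cD c i y)) as [HD|HD].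
    - rewrite (ind_F (~ _)), (ind_T (cD c i y)); auto. 
      destruct (classic (E (cphi c i) y)) as [HE|HE]; [|rewrite ind_F; auto; nra].
      rewrite ind_T; auto. destruct (Rle_lt_dec a 0); [nra|].
      destruct (HE r0) as [Hq0 Hl]. fold a q in Hq0, Hl.
      fold n in Hl.
      assert (ln (a / q) < r * n).
      { replace (ln (a/q)) with ((ln (a/q) / n) * n) by (field; lra). apply Rmult_lt_compat_r; auto. }
      assert (a / q < exp (r * n)).
      { rewrite <- (exp_ln (a / q)). apply exp_increasing; auto. unfold Rdiv; apply Rmult_lt_0_compat; auto. apply Rinv_0_lt_compat; auto. }
      assert (a < exp (r * n) * q).
      { apply (Rmult_lt_reg_r (/ q)). apply Rinv_0_lt_compat; auto. rewrite Rmult_assoc, Rinv_r; lra. }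
      nra.
    - rewrite (ind_T (~ _)), (ind_F (cD c i y)); auto. nra. }
  assert (HsumQ : fsum Qm N <= 1).
  { eapply isum_le; [| apply (isum_fsum (fun i y => Q k y * ind (cD c i y))); intros; apply (proj1 (HQm' i)) | apply (dist_sum _ _ HQ)].
    intros y. simpl. rewrite fsum_scal. pose proof (dist_nonneg _ _ y HQ).
    destruct (disj_fsum c y N) as [[-> _]|[-> _]]; auto; nra. }
  rewrite HJ, Pe_fsum. fold N.
  apply Rle_trans with (/ INR N * (fsum (fun i => 1 - Wmeas W k (cphi c i) (cD c i)) N + K * fsum Qm N)).
  - apply Rmult_le_compat_l; [left; apply Rinv_0_lt_compat; auto|].
    rewrite <- fsum_scal, <- fsum_plus. apply fsum_le; auto.
  - rewrite Rmult_plus_distr_l. apply Rplus_le_compat_l. unfold K.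
    replace (/ INR N * (exp (- (n * g)) * INR N * fsum Qm N)) with (exp (- (n * g)) * fsum Qm N) by (field; lra).
    pose proof (exp_pos (- (n * g))). 
    assert (0 <= fsum Qm N) by (apply fsum_nonneg; intros; apply HQm').
    nra.
Qed.
Lemma Wmeas_ext_Y W k x (A B : nat -> Prop) : inX W k x -> (forall y, inY W k y -> (A y <-> B y)) ->
  Wmeas W k x A = Wmeas W k x B.
Proof.
  intros H HAB. apply Rle_antisym; (eapply Wmeas_le_gen; [auto| |apply Wmeas_sum; auto]);
    intros y; (destruct (classic (inY W k y)) as [Hy|Hy]; [|rewrite W_out; auto; lra]);
    destruct (classic (A y)) as [Ha|Ha].
  - rewrite (ind_T (A y)) by auto; rewrite (ind_T (B y)) by (apply HAB; auto); lra.
  - rewrite (ind_F (A y)) by auto; rewrite (ind_F (B y)) by (rewrite <- HAB; auto); lra.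
  - rewrite (ind_T (A y)) by auto; rewrite (ind_T (B y)) by (apply HAB; auto); lra.
  - rewrite (ind_F (A y)) by auto; rewrite (ind_F (B y)) by (rewrite <- HAB; auto); lra.
Qed.

Lemma ind_union (D : nat -> Prop) m : ind (exists i, (i < m)%nat /\ D i) <= fsum (fun i => ind (D i)) m.
Proof.
  induction m; simpl.
  - rewrite ind_F; [lra|]. intros [i [Hi _]]; lia.
  - destruct (classic (D m)) as [Hd|Hd].
    + pose proof (ind_01 (exists i, (i < S m)%nat /\ D i)). rewrite (ind_T (D m)); auto.
      assert (0 <= fsum (fun i => ind (D i)) m) by (apply fsum_nonneg; intros; apply ind_01). lra.
    + assert (ind (exists i, (i < S m)%nat /\ D i) = ind (exists i, (i < m)%nat /\ D i)).
      { destruct (classic (exists i, (i < m)%nat /\ D i)) as [[i [Hi Hdi]]|Hn].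
        - rewrite (ind_T (exists i, (i < S m)%nat /\ D i)), (ind_T (exists i, (i < m)%nat /\ D i)); [auto | eauto | exists i; split; auto; lia].
        - rewrite (ind_F (exists i, (i < S m)%nat /\ D i)), (ind_F (exists i, (i < m)%nat /\ D i)); auto. intros [i [Hi Hdi]]. destruct (Nat.eq_dec i m); [subst; auto|].
          apply Hn; exists i; split; auto; lia. }
      rewrite H. pose proof (ind_01 (D m)). lra.
Qed.

Lemma Wmeas_union W k x (D : nat -> nat -> Prop) m : inX W k x ->
  Wmeas W k x (fun y => exists i, (i < m)%nat /\ D i y) <= fsum (fun i => Wmeas W k x (D i)) m.
Proof.
  intros H. eapply Wmeas_le_gen; [auto| |apply (isum_fsum (fun i y => Wc W k x y * ind (D i y)))].
  - intros y. simpl. rewrite fsum_scal. apply Rmult_le_compat_l; [apply W_nonneg; auto|].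
    apply (ind_union (fun i => D i y)).
  - intros; apply Wmeas_sum; auto.
Qed.

Section Fein.
Variables (W : channel) (k : nat) (P : nat -> nat -> R) (r : R) (M : nat).
Hypothesis HP : is_dist (inX W k) (P k).
Hypothesis HM : (1 <= M)%nat.

Let n := bl k.
Let th := exp (- (n * r)).
Let eps := Ip_seq W P r k + INR M * th.
Let B x y := inY W k y /\ ~ dens_lt k (Wc W k x y) (outP W P k y) r.

Lemma fein_K1 : infinite_sum (fun x => P k x * Wmeas W k x (B x)) (1 - Ip_seq W P r k).
Proof.
  destruct (pw_sum W k (P k) (fun x => Wmeas W k x (fun y => dens_lt k (Wc W k x y) (outP W P k y) r)) HP)
    as [s [Hs [Hps _]]].
  { intros; apply Wmeas_bounds; auto. }
  unfold Ip_seq. rewrite Hps.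
  eapply isum_ext2; [| |apply (isum_plus _ _ _ _ (dist_sum _ _ HP) (isum_scal _ _ (-1) Hs))]; [|ring].
  intros x. simpl. destruct (classic (inX W k x)).
  - pose proof (Wmeas_compl W k x (fun y => dens_lt k (Wc W k x y) (outP W P k y) r) H) as Hc.
    rewrite (Wmeas_ext_Y W k x (B x) (fun y => ~ dens_lt k (Wc W k x y) (outP W P k y) r)); auto.
    + match type of Hc with ?a + ?b = 1 => replace b with (1 - a) by lra end. ring.
    + intros y Hy. unfold B. tauto.
  - rewrite (dist_out _ _ x HP H). ring.
Qed.

Lemma fein_K2 (x0 : nat) (D : nat -> Prop) : inX W k x0 -> (forall y, D y -> B x0 y) ->
  exists s, infinite_sum (fun x => P k x * Wmeas W k x D) s /\ s <= th.
Proof.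
  intros Hx0 HD.
  destruct (outP_col W P k HP) as [Hcol HQ].
  assert (Hf : forall x y, 0 <= P k x * (Wc W k x y * ind (D y))).
  { intros x y. pose proof (ind_01 (D y)). destruct (classic (inX W k x)).
    - apply Rmult_le_pos; [apply (dist_nonneg _ _ x HP)|]. apply Rmult_le_pos; [apply W_nonneg; auto|lra].
    - rewrite (dist_out _ _ x HP H0); lra. }
  destruct (isum_dom (fun x => P k x * Wmeas W k x D) (P k) 1) as [A [HA _]].
  { intros x. pose proof (dist_nonneg _ _ x HP). destruct (classic (inX W k x)).
    - pose proof (Wmeas_bounds W k x D H0). split; nra.
    - rewrite (dist_out _ _ x HP H0); lra. }
  { apply (dist_sum _ _ HP). }
  destruct (fubini _ (fun x => P k x * Wmeas W k x D) A Hf) as [b [Hb HbA]].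
  { intros x. destruct (classic (inX W k x)).
    - apply isum_scal. apply Wmeas_sum; auto.
    - rewrite (dist_out _ _ x HP H). rewrite Rmult_0_l. apply isum_zero'. intros; ring. }
  { exact HA. }
  exists A. split; auto.
  assert (Hbv : forall y, b y = ind (D y) * outP W P k y).
  { intros y. eapply isum_unique; [apply Hb|]. eapply isum_ext; [|apply isum_scal; apply Hcol].
    intros x. simpl. ring. }
  assert (A <= th * Wmeas W k x0 D).
  { eapply isum_le; [|apply HbA|apply isum_scal; apply Wmeas_sum; auto].
    intros y. simpl. rewrite Hbv. pose proof (proj1 HQ y) as Hq. simpl in Hq.
    unfold th. pose proof (exp_pos (- (n * r))).
    destruct (classic (D y)) as [Hd|Hd]; [|rewrite ind_F; auto; pose proof (W_nonneg W k x0 y Hx0); nra].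
    rewrite ind_T; auto. destruct (HD y Hd) as [_ Hn]. unfold dens_lt in Hn.
    set (a := Wc W k x0 y) in *. set (q := outP W P k y) in *.
    assert (Ha : 0 < a) by (apply NNPP; intro; apply Hn; intro; lra).
    destruct (Rle_lt_dec q 0) as [Hq0|Hq0]; [nra|].
    assert (Hl : r <= ln (a / q) / n) by (apply Rnot_lt_le; intro; apply Hn; auto).
    assert (Hn0 : 0 < n) by apply bl_pos.
    assert (r * n <= ln (a / q)).
    { replace (ln (a/q)) with ((ln (a/q) / n) * n) by (field; lra). apply Rmult_le_compat_r; lra. }
    assert (exp (r * n) <= a / q).
    { rewrite <- (exp_ln (a / q)). apply exp_le_mono; auto. unfold Rdiv; apply Rmult_lt_0_compat; auto. apply Rinv_0_lt_compat; auto. }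
    assert (q * exp (r * n) <= a).
    { apply (Rmult_le_reg_r (/ q)). apply Rinv_0_lt_compat; auto.
      replace (q * exp (r * n) * / q) with (exp (r * n)) by (field; lra). auto. }
    assert (exp (- (n * r)) * exp (r * n) = 1) by (rewrite <- exp_plus; replace (- (n * r) + r * n) with 0 by ring; apply exp_0).
    nra. }
  pose proof (Wmeas_bounds W k x0 D Hx0). unfold th in *. pose proof (exp_pos (- (n * r))). nra.
Qed.

Lemma fein_build : forall m, (m <= M)%nat -> exists (phi : nat -> nat) (D : nat -> nat -> Prop),
  (forall i, (i < m)%nat -> inX W k (phi i)) /\
  (forall i y, (i < m)%nat -> D i y -> B (phi i) y) /\
  (forall i j y, (i < m)%nat -> (j < m)%nat -> i <> j -> D i y -> D j y -> False) /\
  (forall i, (i < m)%nat -> 1 - eps <= Wmeas W k (phi i) (D i)).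
Proof.
  induction m; intros Hm.
  - exists (fun _ => 0%nat), (fun _ _ => False). repeat split; intros; lia.
  - destruct IHm as [phi [D [H1 [H2 [H3 H4]]]]]; [lia|].
    set (U := fun y => exists i, (i < m)%nat /\ D i y).
    assert (Hex : exists x, inX W k x /\ 1 - eps <= Wmeas W k x (fun y => B x y /\ ~ U y)).
    { apply NNPP. intro Hn.
      assert (Hlt : forall x, inX W k x -> Wmeas W k x (fun y => B x y /\ ~ U y) <= 1 - eps).
      { intros x Hx. apply Rnot_lt_le. intro. apply Hn. exists x. split; auto. lra. }
      assert (Hs : forall i, exists s, (i < m)%nat -> infinite_sum (fun x => P k x * Wmeas W k x (D i)) s /\ s <= th).
      { intros i. destruct (Nat.lt_ge_cases i m).
        - destruct (fein_K2 (phi i) (D i)) as [s Hs]; auto. exists s; auto.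
        - exists 0; intros; lia. }
      destruct (choice _ Hs) as [s Hs'].
      assert (HS : infinite_sum (fun x => P k x * (1 - eps) + fsum (fun i => P k x * Wmeas W k x (D i)) m)
                     ((1 - eps) + fsum s m)).
      { apply isum_plus.
        - apply (isum_ext2 (fun x => (1 - eps) * P k x) _ ((1 - eps) * 1)); [intros; ring|ring|].
          apply isum_scal, (dist_sum _ _ HP).
        - apply (isum_fsum (fun i x => P k x * Wmeas W k x (D i))). intros i Hi; apply Hs'; auto. }
      assert (Hle : 1 - Ip_seq W P r k <= (1 - eps) + fsum s m).
      { eapply isum_le; [|apply fein_K1|apply HS].
        intros x. simpl. destruct (classic (inX W k x)) as [Hx|Hx].
        - rewrite fsum_scal. pose proof (dist_nonneg _ _ x HP).
          rewrite <- Rmult_plus_distr_l. apply Rmult_le_compat_l; auto.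
          eapply Rle_trans; [apply (Wmeas_sub W k x (B x) (fun y => B x y /\ ~ U y) U); auto|].
          { intros y _ Hb. destruct (classic (U y)); tauto. }
          pose proof (Hlt x Hx) as G1. pose proof (Wmeas_union W k x D m Hx) as G2. fold U in G2. lra.
        - rewrite (dist_out _ _ x HP Hx). rewrite (fsum_ext _ (fun _ => 0)); [rewrite fsum_const; lra|].
          intros; ring. }
      assert (fsum s m <= INR m * th).
      { rewrite <- fsum_const. apply fsum_le. intros i Hi. apply Hs'; auto. }
      unfold eps in Hle. assert (INR m < INR M) by (apply lt_INR; lia).
      assert (0 < th) by apply exp_pos. nra. }
    destruct Hex as [x [Hx Hxw]].
    exists (fun i => if Nat.eqb i m then x else phi i),
           (fun i y => if Nat.eqb i m then (B x y /\ ~ U y) else D i y).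
    split; [|split; [|split]].
    + intros i Hi. destruct (Nat.eqb_spec i m); auto. apply H1; lia.
    + intros i y Hi. destruct (Nat.eqb_spec i m); [tauto|]. apply H2; lia.
    + intros i j y Hi Hj Hij. destruct (Nat.eqb_spec i m), (Nat.eqb_spec j m); try lia.
      * intros [_ Hu] Hd. apply Hu. exists j; split; auto; lia.
      * intros Hd [_ Hu]. apply Hu. exists i; split; auto; lia.
      * apply H3; lia.
    + intros i Hi. destruct (Nat.eqb_spec i m); auto. apply H4; lia.
Qed.

Lemma feinstein_M : exists c : code W k, cN c = M /\ Pe W k c <= eps.
Proof.
  destruct (fein_build M (le_n M)) as [phi [D [H1 [H2 [H3 H4]]]]].
  assert (Hsub : forall i y, (i < M)%nat -> D i y -> inY W k y) by (intros i y Hi Hd; apply (H2 i y Hi Hd)).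
  exists (Build_code W k M phi D HM H1 Hsub H3). split; auto.
  rewrite Pe_fsum. simpl.
  apply Rle_trans with (/ INR M * fsum (fun _ => eps) M).
  - apply Rmult_le_compat_l. left; apply Rinv_0_lt_compat, lt_0_INR; lia.
    apply fsum_le. intros i Hi. pose proof (H4 i Hi). lra.
  - rewrite fsum_const. right. field. apply not_0_INR. lia.
Qed.

End Fein.

Lemma feinstein W k P r M : is_dist (inX W k) (P k) -> (1 <= M)%nat ->
  exists c : code W k, cN c = M /\ Pe W k c <= Ip_seq W P r k + INR M * exp (- (bl k * r)).
Proof. intros; apply feinstein_M; auto. Qed.
Lemma fein_rate W k P r g : is_dist (inX W k) (P k) -> 0 < g -> 0 <= r - 2 * g ->
  exists c : code W k, r - 2 * g <= rate W k c /\
    Pe W k c <= Ip_seq W P (r - g) k + 2 * exp (- (bl k * g)).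
Proof.
  intros HP Hg Hr.
  set (n := bl k). assert (Hn : 0 < n) by apply bl_pos.
  set (a := r - 2 * g).
  set (z := up (exp (n * a))).
  destruct (archimed (exp (n * a))) as [Hz1 Hz2]. fold z in Hz1, Hz2.
  assert (He1 : 1 <= exp (n * a)) by (rewrite <- exp_0; apply exp_le_mono; unfold a; nra).
  assert (Hz0 : (0 <= z)%Z) by (apply le_IZR; lra).
  set (M := Z.to_nat z).
  assert (HMz : INR M = IZR z) by (unfold M; rewrite INR_IZR_INZ, Z2Nat.id; auto).
  assert (HM : (1 <= M)%nat) by (assert (INR 0 < INR M) by (simpl; lra); apply INR_lt in H; lia).
  destruct (feinstein W k P (r - g) M HP HM) as [c [HcN Hc]].
  exists c. split.
  - unfold rate. rewrite HcN. fold n.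
    assert (n * a < ln (INR M)) by (rewrite <- (ln_exp (n * a)); apply ln_increasing; [apply exp_pos|lra]).
    apply (Rmult_le_reg_r n); auto. replace (ln (INR M) / n * n) with (ln (INR M)) by (field; lra). fold a. lra.
  - eapply Rle_trans; [apply Hc|]. apply Rplus_le_compat_l. fold n.
    assert (INR M <= 2 * exp (n * a)) by lra.
    assert (exp (n * a) * exp (- (n * (r - g))) = exp (- (n * g))).
    { rewrite <- exp_plus. f_equal. unfold a. ring. }
    pose proof (exp_pos (- (n * (r - g)))). nra.
Qed.

Lemma trivial_code W k : exists c : code W k, rate W k c = 0 /\ Pe W k c = 0.
Proof.
  destruct (X_nonempty W k) as [x0 Hx0].
  assert (H1 : (1 <= 1)%nat) by lia.
  assert (H2 : forall i, (i < 1)%nat -> inX W k ((fun _ => x0) i)) by auto.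
  assert (H3 : forall i y, (i < 1)%nat -> (fun _ y => inY W k y) i y -> inY W k y) by auto.
  assert (H4 : forall i j y, (i < 1)%nat -> (j < 1)%nat -> i <> j -> (fun _ y => inY W k y) i y -> (fun _ y => inY W k y) j y -> False)
    by (intros; lia).
  exists (Build_code W k 1 (fun _ => x0) (fun _ y => inY W k y) H1 H2 H3 H4).
  split.
  - unfold rate; simpl. rewrite ln_1. unfold Rdiv; ring.
  - unfold Pe; simpl. rewrite Wmeas_full; auto. field.
Qed.

Lemma exp_decay g d : 0 < g -> 0 < d -> ev (fun n => exp (- (bl n * g)) <= d).
Proof.
  intros Hg Hd. destruct (archimed (- ln d / g)) as [H1 _].
  exists (Z.to_nat (up (- ln d / g))). intros n Hn.
  assert (- ln d / g < bl n).
  { unfold bl. apply Rlt_le_trans with (IZR (up (- ln d / g))); auto.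
    destruct (Z_le_gt_dec 0 (up (- ln d / g))).
    - rewrite <- (Z2Nat.id (up (- ln d / g))); auto. rewrite <- INR_IZR_INZ. apply le_INR. lia.
    - apply Rle_trans with 0. apply IZR_le; lia. apply pos_INR. }
  assert (- ln d < bl n * g).
  { replace (- ln d) with (- ln d / g * g) by (field; lra). apply Rmult_lt_compat_r; auto. }
  left. rewrite <- (exp_ln d); auto. apply exp_increasing. lra.
Qed.

Lemma Pe_bounds W k (c : code W k) : 0 <= Pe W k c <= 1.
Proof.
  rewrite Pe_fsum. pose proof (cN_pos_R c).
  assert (0 <= fsum (fun i => 1 - Wmeas W k (cphi c i) (cD c i)) (cN c) <= INR (cN c)).
  { split.
    - apply fsum_nonneg. intros i Hi. pose proof (Wmeas_bounds W k (cphi c i) (cD c i) (cphi_in W k c i Hi)). lra.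
    - rewrite <- (Rmult_1_r (INR (cN c))), <- fsum_const. apply fsum_le.
      intros i Hi. pose proof (Wmeas_bounds W k (cphi c i) (cD c i) (cphi_in W k c i Hi)). lra. }
  pose proof (Rinv_0_lt_compat _ H). split; [nra|].
  apply Rle_trans with (/ INR (cN c) * INR (cN c)). apply Rmult_le_compat_l; lra. right; field; lra.
Qed.

Lemma Jp_bounds W P Q r k : is_dist (inX W k) (P k) -> 0 <= Jp_seq W P Q r k <= 1.
Proof.
  intros HP. unfold Jp_seq.
  destruct (pw_sum W k (P k) (fun x => Wmeas W k x (fun y => dens_lt k (Wc W k x y) (Q k y) r)) HP) as [s [_ [-> Hs]]]; auto.
  intros; apply Wmeas_bounds; auto.
Qed.

Lemma Jp_mono W P Q r r' k : is_dist (inX W k) (P k) -> r <= r' -> Jp_seq W P Q r k <= Jp_seq W P Q r' k.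
Proof.
  intros HP Hr. unfold Jp_seq.
  destruct (pw_sum W k (P k) (fun x => Wmeas W k x (fun y => dens_lt k (Wc W k x y) (Q k y) r)) HP) as [s [Hs [-> _]]];
    [intros; apply Wmeas_bounds; auto|].
  destruct (pw_sum W k (P k) (fun x => Wmeas W k x (fun y => dens_lt k (Wc W k x y) (Q k y) r')) HP) as [s' [Hs' [-> _]]];
    [intros; apply Wmeas_bounds; auto|].
  eapply isum_le; [|apply Hs|apply Hs']. intros x. simpl. pose proof (dist_nonneg _ _ x HP).
  destruct (classic (inX W k x)) as [Hx|Hx]; [|rewrite (dist_out _ _ x HP Hx); lra].
  apply Rmult_le_compat_l; auto. apply Wmeas_mono; auto.
  intros y Hd Ha. destruct (Hd Ha). split; auto. lra.
Qed.

Lemma limsup_fin u : (forall k, 0 <= u k <= 1) -> exists h, limsup u = Finite h /\ 0 <= h <= 1.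
Proof.
  intros H. pose proof (limsup_ge_lb u 0 (fun k => proj1 (H k))).
  pose proof (limsup_le_ub u 1 (fun k => proj2 (H k))).
  destruct (limsup u); simpl in *; try contradiction. eauto.
Qed.

Lemma Jp_fun W P Q : input_seq W P ->
  exists h : R -> R, (forall s, J_p W P Q s = Finite (h s)) /\ (forall s, 0 <= h s <= 1) /\
    (forall s t, s <= t -> h s <= h t).
Proof.
  intros HP.
  assert (forall s, exists v, J_p W P Q s = Finite v /\ 0 <= v <= 1).
  { intros s. apply limsup_fin. intros k; apply Jp_bounds; auto. }
  destruct (choice _ H) as [h Hh]. exists h. split; [intros; apply Hh|]. split; [intros; apply Hh|].
  intros s t Hst. pose proof (limsup_le (Jp_seq W P Q s) (Jp_seq W P Q t) 0) as L.
  unfold J_p in Hh. rewrite (proj1 (Hh s)), (proj1 (Hh t)) in L. apply L.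
  - intros; apply Jp_bounds; auto.
  - intros d Hd. exists 0%nat. intros n _. pose proof (Jp_mono W P Q s t n (HP n) Hst). lra.
Qed.

Lemma Jp_left W P Q x : input_seq W P -> is_left_lim (J_p W P Q) x (Lim_left (J_p W P Q) x).
Proof.
  intros HP. apply Lim_left_spec. destruct (Jp_fun W P Q HP) as [h [Hh [Hb Hm]]].
  destruct (left_lim_ex h x 1 Hm (fun s => proj2 (Hb s))) as [L HL].
  exists L. intros V HV. destruct (HL V HV) as [d [Hd Hg]]. exists d; split; auto. intros g Hg'. rewrite Hh. auto.
Qed.

Lemma Jp_finite W P Q : input_seq W P -> forall s, exists h, J_p W P Q s = Finite h.
Proof. intros HP s. destruct (Jp_fun W P Q HP) as [h [Hh _]]. eauto. Qed.

Lemma outP_seq W P : input_seq W P -> output_seq W (outP W P).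
Proof. intros HP k. apply (outP_col W P k (HP k)). Qed.

Lemma codes_choice W (Qc : forall k, code W k -> Prop) : (forall k, exists c, Qc k c) ->
  exists Phi : forall k, code W k, forall k, Qc k (Phi k).
Proof.
  intros H. exists (fun k => proj1_sig (constructive_indefinite_description _ (H k))).
  intros k. apply (proj2_sig (constructive_indefinite_description _ (H k))).
Qed.

Lemma conv_seq W (Phi : forall k, code W k) Q r g :
  output_seq W Q -> 0 < g -> ev (fun n => r + g <= rate W n (Phi n)) ->
  Rbar_le (J_p W (fun k => codeP (Phi k)) Q r) (limsup (fun k => Pe W k (Phi k))).
Proof.
  intros HQ Hg Hr. apply limsup_le with (a := 0); [intros; apply Pe_bounds|].
  intros d Hd. destruct (ev_and _ _ Hr (exp_decay g d Hg Hd)) as [N HN].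
  exists N. intros n Hn. destruct (HN n Hn) as [H1 H2].
  pose proof (converse W n (Phi n) (fun k => codeP (Phi k)) Q r g eq_refl (HQ n) Hg H1). lra.
Qed.
Fixpoint jf (Nf : nat -> nat) (n : nat) : nat :=
  match n with
  | O => O
  | S n' => if Nat.leb (Nf (S (jf Nf n'))) (S n') then S (jf Nf n') else jf Nf n'
  end.

Lemma jf_step Nf n : (jf Nf n <= jf Nf (S n))%nat.
Proof. simpl. destruct (Nat.leb _ _); lia. Qed.

Lemma jf_mono Nf n m : (n <= m)%nat -> (jf Nf n <= jf Nf m)%nat.
Proof. induction 1; auto. pose proof (jf_step Nf m). lia. Qed.

Lemma jf_valid Nf n : (1 <= jf Nf n)%nat -> (Nf (jf Nf n) <= n)%nat.
Proof.
  induction n; simpl; intros H; [lia|].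
  destruct (Nat.leb_spec (Nf (S (jf Nf n))) (S n)); auto; try (pose proof (IHn H); lia).
Qed.

Lemma jf_unbounded Nf J : ev (fun n => (J <= jf Nf n)%nat).
Proof.
  induction J. { exists 0%nat; intros; lia. }
  destruct IHJ as [n0 Hn0].
  set (m := max n0 (Nf (S J))).
  assert (Hm : (S J <= jf Nf (S m))%nat).
  { pose proof (Hn0 m ltac:(unfold m; lia)).
    destruct (Nat.eq_dec (jf Nf m) J) as [E|E].
    - simpl. rewrite E. destruct (Nat.leb_spec (Nf (S J)) (S m)); [lia|]. unfold m in H0. lia.
    - pose proof (jf_step Nf m). lia. }
  exists (S m). intros n Hn. pose proof (jf_mono Nf _ _ Hn). lia.
Qed.

Lemma small_frac r d : 0 < r -> 0 < d -> exists J, (1 <= J)%nat /\ r / (2 * (INR J + 1)) <= d / 2.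
Proof.
  intros Hr Hd. destruct (archimed (r / d)) as [H1 _].
  exists (S (Z.to_nat (up (r / d)))). split; [lia|].
  assert (r / d < INR (S (Z.to_nat (up (r / d)))) + 1).
  { rewrite S_INR. destruct (Z_le_gt_dec 0 (up (r / d))).
    - rewrite INR_IZR_INZ, Z2Nat.id; auto. lra.
    - assert (r / d <= 0) by (apply Rle_trans with (IZR (up (r/d))); [lra|apply IZR_le; lia]).
      pose proof (pos_INR (Z.to_nat (up (r / d)))). lra. }
  set (X := INR (S (Z.to_nat (up (r / d)))) + 1) in *.
  assert (0 < X) by (unfold X; pose proof (pos_INR (S (Z.to_nat (up (r / d))))); lra).
  assert (r < d * X) by (apply (Rmult_lt_reg_r (/ d)); [apply Rinv_0_lt_compat; auto|];
     replace (d * X * / d) with X by (field; lra); exact H).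
  apply (Rmult_le_reg_r (2 * X)); [lra|]. replace (r / (2 * X) * (2 * X)) with r by (field; lra).
  replace (d / 2 * (2 * X)) with (d * X) by (field; lra). lra.
Qed.

Section Main.
Variable W : channel.

Lemma ach1 P r : input_seq W P -> Rbar_le (C_p W r) (Lim_left (I_p W P) r).
Proof.
  intros HP.
  assert (HL : is_left_lim (I_p W P) r (Lim_left (I_p W P) r)) by apply (Jp_left W P (outP W P) r HP).
  assert (Hfin := Jp_finite W P (outP W P) HP).
  assert (HI0 : forall s, Rbar_le (Finite 0) (I_p W P s)).
  { intros s. apply limsup_ge_lb. intros; apply Jp_bounds; auto. }
  assert (HI1 : forall s, Rbar_le (I_p W P s) (Finite 1)).
  { intros s. apply limsup_le_ub. intros; apply Jp_bounds; auto. }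
  assert (HL0 : Rbar_le (Finite 0) (Lim_left (I_p W P) r)) by (eapply is_left_lim_lb with (d0 := 1); eauto; lra).
  assert (HL1 : Rbar_le (Lim_left (I_p W P) r) (Finite 1)) by (eapply is_left_lim_ub; eauto).
  destruct (Lim_left (I_p W P) r) as [l| |] eqn:El; simpl in HL0, HL1; try contradiction.
  destruct (Rle_lt_dec r 0) as [Hr|Hr].
  -
    destruct (codes_choice W (fun k c => rate W k c = 0 /\ Pe W k c = 0) (trivial_code W)) as [Phi HPhi].
    eapply Rbar_le_trans; [apply inf_lb; exists Phi; split; [|reflexivity]|].
    + apply liminf_ge_c. intros d Hd. exists 0%nat. intros n _. rewrite (proj1 (HPhi n)). lra.
    + apply limsup_c_le. intros d Hd. exists 0%nat. intros n _. rewrite (proj2 (HPhi n)). lra.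
  - set (gam := fun j : nat => r / (2 * (INR j + 1))).
    assert (Hgam : forall j, 0 < gam j /\ 0 <= r - 2 * gam j).
    { intros j. unfold gam. pose proof (pos_INR j). split.
      - apply Rdiv_lt_0_compat; lra.
      - assert (r / (2 * (INR j + 1)) <= r / 2).
        { unfold Rdiv. apply Rmult_le_compat_l; [lra|]. apply Rinv_le_contravar; lra. }
        lra. }
    assert (Hgam_mono : forall i j, (i <= j)%nat -> gam j <= gam i).
    { intros i j Hij. unfold gam, Rdiv. apply Rmult_le_compat_l; [lra|].
      apply Rinv_le_contravar. pose proof (pos_INR i); lra. apply le_INR in Hij. lra. }
    assert (HN : forall j, exists N, forall n, (N <= n)%nat ->
               Ip_seq W P (r - gam j) n + 2 * exp (- (bl n * gam j)) <= l + 2 * gam j).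
    { intros j. destruct (Hgam j) as [Hg1 Hg2].
      assert (HIj : Rbar_le (I_p W P (r - gam j)) (Finite l)).
      { eapply is_left_lim_lb with (f := I_p W P) (x := r) (d0 := gam j); [exact Hfin | exact HL | exact Hg1 |].
        intros g [Hg Hgj]. destruct (Jp_fun W P (outP W P) HP) as [h [Hh [_ Hm]]].
        unfold I_p. change (limsup (Ip_seq W P ?s)) with (J_p W P (outP W P) s). rewrite !Hh. simpl. apply Hm. lra. }
      destruct (ev_and _ _ (limsup_le_c _ _ HIj (gam j) Hg1) (exp_decay (gam j) (gam j / 2) Hg1 ltac:(lra)))
        as [N HN]. exists N. intros n Hn. destruct (HN n Hn). lra. }
    destruct (choice _ HN) as [Nf HNf].
    destruct (codes_choice W (fun n c => r - 2 * gam (jf Nf n) <= rate W n c /\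
         Pe W n c <= Ip_seq W P (r - gam (jf Nf n)) n + 2 * exp (- (bl n * gam (jf Nf n)))))
      as [Phi HPhi].
    { intros n. apply fein_rate; [apply HP| apply Hgam | apply Hgam]. }
    eapply Rbar_le_trans; [apply inf_lb; exists Phi; split; [|reflexivity]|].
    + apply liminf_ge_c. intros d Hd. destruct (small_frac r d Hr Hd) as [J [HJ1 HJ]].
      destruct (jf_unbounded Nf J) as [N0 HN0]. exists N0. intros n Hn.
      pose proof (HN0 n Hn). pose proof (Hgam_mono _ _ H). fold (gam J) in HJ.
      pose proof (proj1 (HPhi n)). lra.
    + apply limsup_c_le. intros d Hd. destruct (small_frac r d Hr Hd) as [J [HJ1 HJ]].
      destruct (jf_unbounded Nf J) as [N0 HN0]. exists N0. intros n Hn.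
      pose proof (HN0 n Hn). pose proof (Hgam_mono _ _ H). fold (gam J) in HJ.
      pose proof (proj2 (HPhi n)). pose proof (HNf (jf Nf n) n (jf_valid Nf n ltac:(lia))). lra.
Qed.

End Main.
Section Main2.
Variable W : channel.

Lemma ach2 P eps : input_seq W P -> 0 <= eps -> Rbar_le (I_eps W P eps) (C_eps W eps).
Proof.
  intros HP Heps. apply sup_least. intros v [r [-> Hr]].
  destruct (Rle_lt_dec r 0) as [Hr0|Hr0].
  - destruct (codes_choice W (fun k c => rate W k c = 0 /\ Pe W k c = 0) (trivial_code W)) as [Phi HPhi].
    eapply Rbar_le_trans; [|apply sup_ub; exists Phi; split; [|reflexivity]].
    + apply liminf_ge_c. intros d Hd. exists 0%nat. intros n _. rewrite (proj1 (HPhi n)). lra.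
    + apply limsup_c_le. intros d Hd. exists 0%nat. intros n _. rewrite (proj2 (HPhi n)). lra.
  - apply Rbar_le_eps_l. intros d Hd.
    set (g := Rmin d r / 2).
    assert (Hg : 0 < g) by (unfold g; apply Rmin_case; lra).
    assert (Hg2 : 2 * g <= d /\ 2 * g <= r) by (unfold g; split; [pose proof (Rmin_l d r)|pose proof (Rmin_r d r)]; lra).
    destruct (codes_choice W (fun n c => r - 2 * g <= rate W n c /\
         Pe W n c <= Ip_seq W P (r - g) n + 2 * exp (- (bl n * g)))) as [Phi HPhi].
    { intros n. apply fein_rate; auto. lra. }
    eapply Rbar_le_trans; [|apply sup_ub; exists Phi; split; [|reflexivity]].
    + apply liminf_ge_c. intros d' Hd'. exists 0%nat. intros n _. pose proof (proj1 (HPhi n)). lra.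
    + eapply Rbar_le_trans; [|apply Hr].
      apply limsup_le with (a := 0); [intros; apply Jp_bounds; auto|].
      intros d' Hd'. destruct (exp_decay g (d'/2) Hg ltac:(lra)) as [N HN]. exists N. intros n Hn.
      pose proof (HN n Hn). pose proof (proj2 (HPhi n)).
      pose proof (Jp_mono W P (outP W P) (r - g) r n (HP n) ltac:(lra)). unfold Ip_seq in *. unfold Jp_seq in *. lra.
Qed.

Lemma conv1 (Phi : forall k, code W k) r Q :
  Rbar_le (Finite r) (liminf (fun k => rate W k (Phi k))) -> output_seq W Q ->
  Rbar_le (Lim_left (J_p W (fun k => codeP (Phi k)) Q) r) (limsup (fun k => Pe W k (Phi k))).
Proof.
  intros Hr HQ.
  assert (HP : input_seq W (fun k => codeP (Phi k))) by (intros k; apply codeP_dist).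
  apply (is_left_lim_ub _ _ _ _ (Jp_finite W _ Q HP) (Jp_left W _ Q r HP)).
  intros g Hg. apply conv_seq with (g := g / 2); auto; [lra|].
  destruct (liminf_ge _ _ Hr (g/2) ltac:(lra)) as [N HN]. exists N. intros n Hn. pose proof (HN n Hn). lra.
Qed.

Lemma conv2 (Phi : forall k, code W k) eps Q :
  Rbar_le (limsup (fun k => Pe W k (Phi k))) (Finite eps) -> output_seq W Q ->
  Rbar_le (liminf (fun k => rate W k (Phi k))) (J_eps W (fun k => codeP (Phi k)) Q eps).
Proof.
  intros HPe HQ. apply Rbar_le_lt_all. intros r Hn.
  destruct (Rbar_lt_witness r _ Hn) as [r' [Hrr' Hr']].
  set (g := (r' - r) / 2). assert (Hg : 0 < g) by (unfold g; lra).
  apply sup_ub. exists r. split; auto.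
  eapply Rbar_le_trans; [|apply HPe]. apply conv_seq with (g := g); auto.
  destruct (liminf_ge _ _ Hr' g Hg) as [N HN]. exists N. intros n Hn'. pose proof (HN n Hn'). unfold g in *. lra.
Qed.

End Main2.

Theorem theorem3 (W : channel) :
  (forall r : R,
     C_p W r =
       Rbar_inf (fun v => exists P, input_seq W P /\
                   v = Lim_left (fun s => I_p W P s) r) /\
     C_p W r =
       Rbar_inf (fun v => exists P, input_seq W P /\
                   v = Rbar_sup (fun u => exists Q, output_seq W Q /\
                          u = Lim_left (fun s => J_p W P Q s) r))) /\
  (forall eps : R, 0 <= eps < 1 ->
     C_eps W eps =
       Rbar_sup (fun v => exists P, input_seq W P /\ v = I_eps W P eps) /\
     C_eps W eps =
       Rbar_sup (fun v => exists P, input_seq W P /\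
                   v = Rbar_inf (fun u => exists Q, output_seq W Q /\
                          u = J_eps W P Q eps))).
Proof.
  split.
  - intros r.
    set (R1 := Rbar_inf (fun v => exists P, input_seq W P /\ v = Lim_left (fun s => I_p W P s) r)).
    set (R2 := Rbar_inf (fun v => exists P, input_seq W P /\
                   v = Rbar_sup (fun u => exists Q, output_seq W Q /\
                          u = Lim_left (fun s => J_p W P Q s) r))).
    assert (H1 : Rbar_le (C_p W r) R1).
    { apply inf_greatest. intros v [P [HP ->]]. apply ach1; auto. }
    assert (H2 : Rbar_le R1 R2).
    { apply inf_greatest. intros v [P [HP ->]].
      eapply Rbar_le_trans; [apply inf_lb; exists P; split; [exact HP|reflexivity]|].
      apply sup_ub. exists (outP W P). split; [apply outP_seq; auto|reflexivity]. }
    assert (H3 : Rbar_le R2 (C_p W r)).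
    { apply inf_greatest. intros v [Phi [Hrate ->]].
      eapply Rbar_le_trans; [apply inf_lb; exists (fun k => codeP (Phi k)); split; [intros k; apply codeP_dist|reflexivity]|].
      apply sup_least. intros u [Q [HQ ->]]. apply conv1; auto. }
    split; apply Rbar_le_antisym; eauto using Rbar_le_trans.
  - intros eps [Heps _].
    set (S1 := Rbar_sup (fun v => exists P, input_seq W P /\ v = I_eps W P eps)).
    set (S2 := Rbar_sup (fun v => exists P, input_seq W P /\
                   v = Rbar_inf (fun u => exists Q, output_seq W Q /\ u = J_eps W P Q eps))).
    assert (H1 : Rbar_le (C_eps W eps) S2).
    { apply sup_least. intros v [Phi [HPe ->]].
      eapply Rbar_le_trans; [|apply sup_ub; exists (fun k => codeP (Phi k)); split; [intros k; apply codeP_dist|reflexivity]].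
      apply inf_greatest. intros u [Q [HQ ->]]. apply conv2; auto. }
    assert (H2 : Rbar_le S2 S1).
    { apply sup_least. intros v [P [HP ->]].
      eapply Rbar_le_trans; [apply inf_lb; exists (outP W P); split; [apply outP_seq; auto|reflexivity]|].
      apply sup_ub. exists P. split; [exact HP|reflexivity]. }
    assert (H3 : Rbar_le S1 (C_eps W eps)).
    { apply sup_least. intros v [P [HP ->]]. apply ach2; auto. }
    split; apply Rbar_le_antisym; eauto using Rbar_le_trans.
Qed.
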